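(* Let $A\in\{0,1\}^{n\times n}$ be symmetric, let $t\in(0,1)$, $c_{A}=\sqrt{(1-t)/t}$, $c_{A^c}=\sqrt{t/(1-t)}$, $\lambda=\frac{1}{48\sqrt n}$, and let $Y^*$ be a cluster matrix as described in the context. Then $Y^*$ is the unique optimal solution of $$\max_{Y\in\mathbb{R}^{n\times n}}\ c_{A}\sum_{(i,j):a_{ij}=1}y_{ij}-c_{A^c}\sum_{(i,j):a_{ij}=0}y_{ij}-48\sqrt{n}\,\|Y\|_*\quad\text{s.t. } 0\le y_{ij}\le 1\ \ \forall i,j,$$ if there exist a matrix $W\in\mathbb{R}^{n\times n}$ and a number $0<\epsilon<1$ such that (a) $\|W\|\le 1$; (b) $\|P_T(W)\|_\infty\le \frac{\epsilon}{2}\lambda\min\{c_{A^c},c_{A}\}$; (c) $-(1+\epsilon)\lambda c_{A^c}-(U_0U_0^\top+W)_{ij}=0$ for all $(i,j)\in R\cap\mathcal{A}^c$; $-(1+\epsilon)\lambda c_{A}+w_{ij}=0$ for all $(i,j)\in R^c\cap\mathcal{A}$; $(1-\epsilon)\lambda c_{A}-(U_0U_0^\top+W)_{ij}\ge 0$ for all $(i,j)\in R\cap\mathcal{A}$; and $(1-\epsilon)\lambda c_{A^c}+w_{ij}\ge0$ for all $(i,j)\in R^c\cap\mathcal{A}^c$.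
   Context: Cluster matrix: the nodes $\{1,\dots,n\}$ contain a subset $V_1$ partitioned into disjoint clusters (remaining nodes are outliers), and $Y^*\in\{0,1\}^{n\times n}$ has $y^*_{ij}=1$ iff $i,j\in V_1$ lie in the same cluster (including $i=j\in V_1$), $0$ otherwise. $Y^*$ is symmetric positive semidefinite; write its compact eigen/singular value decomposition $Y^*=U_0\Sigma_0U_0^\top$ with $U_0$ having orthonormal columns. $P_T(M):=U_0U_0^\top M+MU_0U_0^\top-U_0U_0^\top MU_0U_0^\top$. $\mathcal{A}=\mathrm{support}(A)=\{(i,j):a_{ij}=1\}$, $R=\mathrm{support}(Y^* )$, and complements are taken in $\{1,\dots,n\}^2$. $\|W\|$ is the spectral norm, $\|M\|_\infty=\max_{ij}|m_{ij}|$, $\|\cdot\|_*$ the nuclear norm. *)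

(* Defs.v *)
From HB Require Import structures.
From mathcomp Require Import all_boot all_order all_algebra.
From mathcomp Require Import boolp classical_sets reals.
Set Implicit Arguments. Unset Strict Implicit. Unset Printing Implicit Defensive.
Import Order.TTheory GRing.Theory Num.Theory.
Local Open Scope ring_scope.
Local Open Scope classical_set_scope.

Section Defs.
Variable R : realType.

Definition vnorm2 (n : nat) (x : 'cV[R]_n) : R :=
  Num.sqrt (\sum_(i < n) x i 0 ^+ 2).

Definition specnorm (m n : nat) (W : 'M[R]_(m, n)) : R :=
  sup [set vnorm2 (W *m x) | x in [set x : 'cV[R]_n | vnorm2 x <= 1]].

(* Nuclear norm, as the dual norm of the spectral norm
   (equivalently, the sum of the singular values). *)
Definition nucnorm (m n : nat) (Y : 'M[R]_(m, n)) : R :=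
  sup [set \tr (Y^T *m Z) | Z in [set Z : 'M[R]_(m, n) | specnorm Z <= 1]].

Definition maxnorm (m n : nat) (M : 'M[R]_(m, n)) : R :=
  \big[Num.max/0]_(i < m) \big[Num.max/0]_(j < n) `|M i j|.

(* Cluster matrix: V1 is the set of clustered (non-outlier) nodes, and the
   clusters are the classes of V1 under the labeling [cl]. *)
Definition cluster_matrix (n : nat) (V1 : {set 'I_n}) (cl : 'I_n -> nat)
  : 'M[R]_n :=
  \matrix_(i, j) (((i \in V1) && (j \in V1) && (cl i == cl j))%:R).

Definition PT (n r : nat) (U0 : 'M[R]_(n, r)) (M : 'M[R]_n) : 'M[R]_n :=
  let P := U0 *m U0^T in P *m M + M *m P - P *m M *m P.

Definition objective (n : nat) (A : 'M[R]_n) (cA cAc : R) (Y : 'M[R]_n) : R :=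
  cA * (\sum_(i < n) \sum_(j < n | A i j == 1) Y i j)
  - cAc * (\sum_(i < n) \sum_(j < n | A i j == 0) Y i j)
  - 48 * Num.sqrt n%:R * nucnorm Y.

Definition feasible (n : nat) (Y : 'M[R]_n) : Prop :=
  forall i j, 0 <= Y i j <= 1.

End Defs.

(* Main.v *)
Require Import Defs.
From HB Require Import structures.
From mathcomp Require Import all_boot all_order all_algebra.
From mathcomp Require Import boolp classical_sets reals.
From mathcomp Require Import ring lra.
Set Implicit Arguments. Unset Strict Implicit. Unset Printing Implicit Defensive.
Import Order.TTheory GRing.Theory Num.Theory.
Local Open Scope ring_scope.
Local Open Scope classical_set_scope.


Section Helpers.
Variable R : realType.

Lemma sqr_normr (x : R) : `|x| ^+ 2 = x ^+ 2.
Proof. exact: real_normK (num_real x). Qed.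

Lemma amgm (a b : R) : a * b <= (a ^+ 2 + b ^+ 2) / 2.
Proof. have := sqr_ge0 (a - b); nra. Qed.

Definition qn n (x : 'cV[R]_n) : R := \sum_(i < n) x i 0 ^+ 2.

Lemma qn_ge0 n (x : 'cV[R]_n) : 0 <= qn x.
Proof. by apply: sumr_ge0 => i _; rewrite sqr_ge0. Qed.

Lemma vnorm2_le1 n (x : 'cV[R]_n) : (vnorm2 x <= 1) = (qn x <= 1).
Proof. by rewrite /vnorm2 -[X in _ <= X]sqrtr1 ler_sqrt. Qed.

Lemma qn_tr n (x : 'cV[R]_n) : qn x = (x^T *m x) 0 0.
Proof. by rewrite !mxE; apply: eq_bigr => i _; rewrite !mxE expr2. Qed.

Lemma qn_add n (a b : 'cV[R]_n) : a^T *m b = 0 -> qn (a + b) = qn a + qn b.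
Proof.
move=> h; rewrite !qn_tr [(a + b)^T]linearD /= mulmxDl !mulmxDr h.
have h2 : b^T *m a = 0 by rewrite -[a]trmxK -trmx_mul h trmx0.
by rewrite h2 addr0 add0r [LHS]mxE.
Qed.

Lemma qn_scale n c (x : 'cV[R]_n) : qn (c *: x) = c ^+ 2 * qn x.
Proof. by rewrite /qn mulr_sumr; apply: eq_bigr => i _; rewrite mxE exprMn. Qed.

Lemma qn_eq0 n (x : 'cV[R]_n) : qn x = 0 -> x = 0.
Proof.
move=> /eqP; rewrite psumr_eq0 => [h|i _]; last by rewrite sqr_ge0.
apply/matrixP => i j; rewrite ord1 mxE.
by move/allP: h => /(_ i (mem_index_enum _)) /implyP /(_ isT); rewrite sqrf_eq0 => /eqP.
Qed.

Lemma qn0 n : qn (0 : 'cV[R]_n) = 0.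
Proof. by rewrite /qn big1 // => i _; rewrite mxE expr0n. Qed.

Lemma le_sum_term (I : finType) (F : I -> R) i :
  (forall j, 0 <= F j) -> F i <= \sum_j F j.
Proof.
move=> h; rewrite (bigD1 i) //= lerDl; apply: sumr_ge0 => j _; exact: h.
Qed.

Definition SN n (W : 'M[R]_n) :=
  [set vnorm2 (W *m x) | x in [set x : 'cV[R]_n | vnorm2 x <= 1]].

Lemma SN_has_sup n (W : 'M[R]_n) : has_sup (SN W).
Proof.
split.
  exists (vnorm2 (W *m (0 : 'cV[R]_n))); exists 0 => //=.
  by rewrite vnorm2_le1 qn0.
exists (Num.sqrt (\sum_i (\sum_j `|W i j|) ^+ 2)).
move=> _ [x /= hx <-]; rewrite /vnorm2; apply: ler_wsqrtr.
apply: ler_sum => i _.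
have hxj : forall j, `|x j 0| <= 1.
  move=> j; have := @le_sum_term _ (fun k => x k 0 ^+ 2) j (fun k => sqr_ge0 _).
  rewrite vnorm2_le1 in hx.
  rewrite -sqr_normr => h; have {h} h := le_trans h hx; have h0 := normr_ge0 (x j 0); nra.
have hb : `|(W *m x) i 0| <= \sum_j `|W i j|.
  rewrite mxE; apply: le_trans (ler_norm_sum _ _ _) _.
  apply: ler_sum => j _; rewrite normrM.
  have := hxj j; have := normr_ge0 (W i j); have := normr_ge0 (x j 0); nra.
rewrite -sqr_normr; have := normr_ge0 ((W *m x) i 0); nra.
Qed.

Lemma specnorm_ub n (W : 'M[R]_n) x : vnorm2 x <= 1 -> vnorm2 (W *m x) <= specnorm W.
Proof. by move=> hx; apply: (sup_upper_bound (SN_has_sup W)); exists x. Qed.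

Lemma specnorm_le1 n (W : 'M[R]_n) :
  (forall x, qn x <= 1 -> qn (W *m x) <= 1) -> specnorm W <= 1.
Proof.
move=> h; apply: ge_sup; first by case: (SN_has_sup W).
by move=> _ [x /= hx <-]; rewrite vnorm2_le1; apply: h; rewrite -vnorm2_le1.
Qed.

Lemma specnorm_qn n (W : 'M[R]_n) x : specnorm W <= 1 -> qn (W *m x) <= qn x.
Proof.
move=> hW; case: (eqVneq (qn x) 0) => [/qn_eq0 ->|nz].
  by rewrite mulmx0 qn0.
have qpos : 0 < qn x by rewrite lt_def nz qn_ge0.
set c := Num.sqrt (qn x).
have cpos : 0 < c by rewrite sqrtr_gt0.
have c2 : c ^+ 2 = qn x by rewrite sqr_sqrtr // qn_ge0.
have hy : qn (c^-1 *: x) <= 1.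
  by rewrite qn_scale exprVn c2 mulVf.
have h : vnorm2 (W *m (c^-1 *: x)) <= 1.
  by apply: le_trans hW; apply: specnorm_ub; rewrite vnorm2_le1.
move: h; rewrite vnorm2_le1 -scalemxAr qn_scale exprVn c2 mulrC.
by rewrite ler_pdivrMr // mul1r.
Qed.


Definition inner n (X Y : 'M[R]_n) : R := \sum_i \sum_j X i j * Y i j.

Lemma tr_inner n (Y Z : 'M[R]_n) : \tr (Y^T *m Z) = inner Y Z.
Proof.
rewrite /inner /mxtrace exchange_big /=; apply: eq_bigr => i _.
by rewrite mxE; apply: eq_bigr => j _; rewrite mxE.
Qed.

Lemma qn_delta n (j : 'I_n) : qn (delta_mx j (0 : 'I_1) : 'cV[R]_n) = 1.
Proof. by rewrite qn_tr trmx_delta mul_delta_mx mxE !eqxx. Qed.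

Lemma entry_le1 n (Z : 'M[R]_n) i j : specnorm Z <= 1 -> `|Z i j| <= 1.
Proof.
move=> hZ; have := specnorm_qn (delta_mx j (0 : 'I_1)) hZ; rewrite qn_delta.
rewrite -colE => h.
have h2 := @le_sum_term _ (fun k => col j Z k 0 ^+ 2) i (fun k => sqr_ge0 _).
have {h2} h := le_trans h2 h; rewrite mxE -sqr_normr in h.
have := normr_ge0 (Z i j); nra.
Qed.

Definition NS n (Y : 'M[R]_n) :=
  [set \tr (Y^T *m Z) | Z in [set Z : 'M[R]_n | specnorm Z <= 1]].

Lemma specnorm0 n : specnorm (0 : 'M[R]_n) <= 1.
Proof. by apply: specnorm_le1 => x _; rewrite mul0mx qn0. Qed.

Lemma NS_has_sup n (Y : 'M[R]_n) : has_sup (NS Y).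
Proof.
split.
  by exists (\tr (Y^T *m 0)); exists 0 => //=; exact: specnorm0.
exists (\sum_i \sum_j `|Y i j|) => _ [Z /= hZ <-]; rewrite tr_inner.
apply: ler_sum => i _; apply: ler_sum => j _.
apply: le_trans (ler_norm _) _; rewrite normrM.
have := entry_le1 i j hZ; have := normr_ge0 (Y i j); have := normr_ge0 (Z i j); nra.
Qed.

Lemma nucnorm_lb n (Y Z : 'M[R]_n) : specnorm Z <= 1 -> inner Y Z <= nucnorm Y.
Proof.
by move=> hZ; apply: (sup_upper_bound (NS_has_sup Y)); exists Z => //; rewrite tr_inner.
Qed.

Lemma nucnorm_ub n (Y : 'M[R]_n) b :
  (forall Z, specnorm Z <= 1 -> inner Y Z <= b) -> nucnorm Y <= b.
Proof.
move=> h; apply: ge_sup; first by case: (NS_has_sup Y).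
by move=> _ [Z /= hZ <-]; rewrite tr_inner; apply: h.
Qed.


Section Proj.
Variables (n r : nat) (U : 'M[R]_(n, r)).
Hypothesis hU : U^T *m U = 1%:M.
Let P := U *m U^T.
Let Q := 1%:M - P.

Lemma PP : P *m P = P.
Proof. by rewrite /P mulmxA -(mulmxA U) hU mulmx1. Qed.

Lemma PtP : P^T = P.
Proof. by rewrite /P trmx_mul trmxK. Qed.

Lemma PQ : P *m Q = 0.
Proof. by rewrite /Q mulmxBr mulmx1 PP subrr. Qed.

Lemma orthPQ (x y : 'cV[R]_n) : (P *m x)^T *m (Q *m y) = 0.
Proof. by rewrite trmx_mul PtP -mulmxA (mulmxA P) PQ mul0mx mulmx0. Qed.

Lemma decPQ (x : 'cV[R]_n) : P *m x + Q *m x = x.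
Proof. by rewrite /Q mulmxBl mul1mx addrC subrK. Qed.

Lemma qn_PQ (x : 'cV[R]_n) : qn x = qn (P *m x) + qn (Q *m x).
Proof. by rewrite -qn_add ?decPQ // orthPQ. Qed.

Definition Zc (W : 'M[R]_n) := P + Q *m W *m Q.

Lemma Zc_spec W : specnorm W <= 1 -> specnorm (Zc W) <= 1.
Proof.
move=> hW; apply: specnorm_le1 => x hx.
rewrite /Zc mulmxDl.
have -> : Q *m W *m Q *m x = Q *m (W *m (Q *m x)) by rewrite !mulmxA.
rewrite qn_add ?orthPQ //.
apply: le_trans hx; rewrite [X in _ <= X]qn_PQ lerD2l.
apply: le_trans (specnorm_qn (Q *m x) hW).
by rewrite [X in _ <= X]qn_PQ lerDr qn_ge0.
Qed.

Lemma UtQ : U^T *m Q = 0.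
Proof. by rewrite /Q /P mulmxBr mulmx1 mulmxA hU mul1mx subrr. Qed.

Lemma QU : Q *m U = 0.
Proof. by rewrite /Q /P mulmxBl mul1mx -mulmxA hU mulmx1 subrr. Qed.

Lemma UtZU W : U^T *m Zc W *m U = 1%:M.
Proof.
rewrite /Zc mulmxDr mulmxDl !mulmxA UtQ !mul0mx addr0.
by rewrite hU mul1mx hU.
Qed.

Lemma Zc_entry W i j : Zc W i j = P i j + W i j - PT U W i j.
Proof.
have e : Zc W = P + (W - P *m W - (W *m P - P *m W *m P)).
  by rewrite /Zc /Q mulmxBl mul1mx !mulmxBr !mulmx1 mulmxBl.
rewrite e /PT -/P !mxE; ring.
Qed.

Variable s : 'rV[R]_r.
Hypothesis spos : forall k, 0 < s 0 k.

Lemma inner_YZ (Z : 'M[R]_n) :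
  inner (U *m diag_mx s *m U^T) Z = \sum_k s 0 k * (U^T *m Z *m U) k k.
Proof.
rewrite -tr_inner.
have -> : (U *m diag_mx s *m U^T)^T = U *m diag_mx s *m U^T.
  by rewrite !trmx_mul trmxK tr_diag_mx mulmxA.
rewrite -!mulmxA mxtrace_mulC -mulmxA mul_diag_mx /mxtrace.
by apply: eq_bigr => k _; rewrite mxE !mulmxA.
Qed.

Lemma diag_le1 (Z : 'M[R]_n) k : specnorm Z <= 1 -> (U^T *m Z *m U) k k <= 1.
Proof.
move=> hZ.
have hu : qn (col k U) = 1.
  have := congr1 (fun M : 'M[R]_r => M k k) hU; rewrite !mxE eqxx mulr1n => <-.
  by apply: eq_bigr => i _; rewrite !mxE expr2.
have hzu := specnorm_qn (col k U) hZ; rewrite hu in hzu.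
have e : (U^T *m Z *m U) k k = \sum_i col k U i 0 * (Z *m col k U) i 0.
  rewrite -mulmxA mxE; apply: eq_bigr => i _.
  have -> : Z *m col k U = col k (Z *m U) by rewrite !colE mulmxA.
  by rewrite !mxE.
rewrite e; apply: (@le_trans _ _ ((qn (col k U) + qn (Z *m col k U)) / 2)); last first.
  by rewrite hu; lra.
rewrite /qn -big_split mulr_suml /=; apply: ler_sum => i _.
exact: amgm.
Qed.

Lemma nuc_Ys_le : nucnorm (U *m diag_mx s *m U^T) <= \sum_k s 0 k.
Proof.
apply: nucnorm_ub => Z hZ; rewrite inner_YZ; apply: ler_sum => k _.
by rewrite ler_piMr ?diag_le1 // ltW.
Qed.

Lemma inner_Ys_Zc W : inner (U *m diag_mx s *m U^T) (Zc W) = \sum_k s 0 k.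
Proof.
rewrite inner_YZ UtZU; apply: eq_bigr => k _; by rewrite mxE eqxx mulr1.
Qed.

End Proj.


Section Cluster.
Variables (n r : nat) (V1 : {set 'I_n}) (cl : 'I_n -> nat) (U : 'M[R]_(n, r)) (s : 'rV[R]_r).
Hypothesis hU : U^T *m U = 1%:M.
Hypothesis spos : forall k, 0 < s 0 k.
Hypothesis hY : cluster_matrix R V1 cl = U *m diag_mx s *m U^T.
Let Ys := cluster_matrix R V1 cl.

Lemma Ys_term i l j : Ys i l * Ys l j = Ys i j * Ys l j.
Proof.
rewrite !mxE; case: (eqVneq (cl l) (cl j)) => [->|h].
  by case: (i \in V1); case: (l \in V1); case: (j \in V1); rewrite /= ?mul0r ?mulr0.
by rewrite !andbF !mulr0.
Qed.

Lemma Ys_ge0 i j : 0 <= Ys i j.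
Proof. by rewrite mxE ler0n. Qed.

Let m := \row_j (if j \in V1 then \sum_l Ys l j else 1) : 'rV[R]_n.

Lemma m_pos j : 0 < m 0 j.
Proof.
rewrite mxE; case: ifP => // hj.
apply: lt_le_trans (le_sum_term (F := fun l => Ys l j) j (fun l => Ys_ge0 l j)).
by rewrite mxE hj eqxx.
Qed.

Lemma YsYs : Ys *m Ys = Ys *m diag_mx m.
Proof.
apply/matrixP => i j; rewrite mul_mx_diag !mxE.
rewrite (eq_bigr (fun l => Ys i j * Ys l j)); last by move=> l _; exact: Ys_term.
rewrite -mulr_sumr; case: ifP => hj; rewrite [Ys i j]mxE hj ?andbT ?andbF ?mul0r //.
Qed.

Lemma Ys_P i j : Ys i j = (U *m U^T) i j * m 0 j.
Proof.
have h2 : U^T *m Ys = diag_mx s *m U^T.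
  by rewrite /Ys hY !mulmxA hU mul1mx.
have h3 : U^T *m (Ys - diag_mx m) = 0.
  have h0 : diag_mx s *m (U^T *m (Ys - diag_mx m)) = 0.
    by rewrite mulmxA -h2 -mulmxA mulmxBr YsYs subrr mulmx0.
  apply/matrixP => k l; have := congr1 (fun M : 'M[R]_(r, n) => M k l) h0.
  rewrite mul_diag_mx !mxE => /eqP; rewrite mulf_eq0 => /orP [|/eqP //].
  by rewrite (gt_eqF (spos k)).
have h4 : Ys = U *m U^T *m diag_mx m.
  have e1 : U *m U^T *m Ys = Ys by rewrite -mulmxA h2 /Ys hY !mulmxA.
  rewrite -{1}e1 -[U *m U^T *m Ys]mulmxA -[U *m U^T *m diag_mx m]mulmxA.
  apply/eqP; rewrite -subr_eq0 -!mulmxBr h3 mulmx0 //.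
by rewrite {1}h4 mul_mx_diag mxE.
Qed.

Lemma P_zero i j : Ys i j = 0 -> (U *m U^T) i j = 0.
Proof.
rewrite Ys_P => /eqP; rewrite mulf_eq0 (gt_eqF (m_pos j)) orbF.
by move/eqP.
Qed.

End Cluster.

End Helpers.

Set Implicit Arguments. Unset Strict Implicit.


Lemma le_bigmaxR (R : realType) (I : finType) (F : I -> R) i :
  F i <= \big[Num.max/0]_j F j.
Proof.
have := mem_index_enum i; elim: (index_enum I) => [//|x s IH].
rewrite big_cons in_cons => /orP [/eqP ->|/IH h]; first by rewrite le_max lexx.
by rewrite le_max h orbT.
Qed.

Lemma entry_le_maxnorm (R : realType) n (M : 'M[R]_n) i j : `|M i j| <= maxnorm M.
Proof.
apply: le_trans (le_bigmaxR (fun i => \big[Num.max/0]_j `|M i j|) i).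
exact: (le_bigmaxR (fun j => `|M i j|) j).
Qed.

Lemma term_bound (R : realType) (a d e mn : R) : 0 <= e * mn ->
  (d <= 0 /\ e / 2 * mn <= a) \/ (0 <= d /\ a <= - (e / 2 * mn)) ->
  a * d <= - (e / 2 * mn) * `|d|.
Proof.
move=> h [[hd ha]|[hd ha]].
  rewrite ler0_norm //; nra.
rewrite ger0_norm //; nra.
Qed.

Unset Implicit Arguments.
Theorem proposition1 (R : realType) (n : nat) (A : 'M[R]_n) (t : R)
  (V1 : {set 'I_n}) (cl : 'I_n -> nat)
  (r : nat) (U0 : 'M[R]_(n, r)) (s : 'rV[R]_r) :
  (forall i j, A i j = 0 \/ A i j = 1) ->
  A^T = A ->
  0 < t < 1 ->
  U0^T *m U0 = 1%:M ->
  (forall k, 0 < s 0 k) ->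
  cluster_matrix R V1 cl = U0 *m diag_mx s *m U0^T ->
  let Ystar := cluster_matrix R V1 cl in
  let cA := Num.sqrt ((1 - t) / t) in
  let cAc := Num.sqrt (t / (1 - t)) in
  let lam := 1 / (48 * Num.sqrt n%:R) in
  let P := U0 *m U0^T in
  (exists (W : 'M[R]_n) (eps : R),
     [/\ 0 < eps < 1,
         specnorm W <= 1,
         maxnorm (PT U0 W) <= eps / 2 * lam * Num.min cAc cA &
         forall i j,
           [/\ (Ystar i j = 1 -> A i j = 0 ->
                  - (1 + eps) * lam * cAc - (P + W) i j = 0),
               (Ystar i j = 0 -> A i j = 1 ->
                  - (1 + eps) * lam * cA + W i j = 0),
               (Ystar i j = 1 -> A i j = 1 ->
                  0 <= (1 - eps) * lam * cA - (P + W) i j) &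
               (Ystar i j = 0 -> A i j = 0 ->
                  0 <= (1 - eps) * lam * cAc + W i j)]]) ->
  feasible Ystar /\
  (forall Y : 'M[R]_n, feasible Y -> Y <> Ystar ->
     objective A cA cAc Y < objective A cA cAc Ystar).
Proof.
move=> hA01 hAT ht hU spos hY Ystar cA cAc lam P [W [eps [heps hW hPT hc]]].
split.
  by move=> i j; rewrite /Ystar mxE ler0n lern1 leq_b1.
move=> Y hYf hne.
case: (posnP n) => [n0|npos].
  by exfalso; apply: hne; apply/matrixP => i; have := ltn_ord i; rewrite {2}n0.
have [eps0 eps1] := andP heps.
have [t0 t1] := andP ht.
pose K : R := 48 * Num.sqrt (n%:R : R).
have Kpos : 0 < K by rewrite mulr_gt0 // sqrtr_gt0 ltr0n.
have hlam : lam * K = 1 by rewrite /lam mul1r mulVf // gt_eqF.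
have cApos : 0 < cA by rewrite sqrtr_gt0 divr_gt0 // subr_gt0.
have cAcpos : 0 < cAc by rewrite sqrtr_gt0 divr_gt0 // subr_gt0.
pose mn : R := Num.min cAc cA.
have mnpos : 0 < mn by rewrite lt_min cApos cAcpos.
have mn1 : mn <= cAc by rewrite ge_min lexx.
have mn2 : mn <= cA by rewrite ge_min lexx orbT.
set Z := Zc U0 W.
have hZ : specnorm Z <= 1 by apply: Zc_spec.
set G := \matrix_(i, j) (if A i j == 1 then cA else - cAc) : 'M[R]_n.
have lin : forall X : 'M[R]_n, cA * (\sum_i \sum_(j | A i j == 1) X i j)
    - cAc * (\sum_i \sum_(j | A i j == 0) X i j) = inner G X.
  move=> X; rewrite /inner !mulr_sumr -sumrB; apply: eq_bigr => i _.
  rewrite [RHS](bigID (fun j => A i j == 1)) /=.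
  have E1 : \sum_(j | A i j == 1) G i j * X i j = \sum_(j | A i j == 1) cA * X i j.
    by apply: eq_bigr => j /eqP h; rewrite mxE h eqxx.
  have E0 : \sum_(j | ~~ (A i j == 1)) G i j * X i j = - \sum_(j | A i j == 0) cAc * X i j.
    rewrite -sumrN; apply: eq_big => j.
      by case: (hA01 i j) => ->; rewrite ?eqxx ?oner_eq0 ?(eq_sym 0 1) ?oner_eq0.
    by move=> h; rewrite mxE (negbTE h) mulNr.
  by rewrite E1 E0 !mulr_sumr.
have hnY : inner Y Z <= nucnorm Y by apply: nucnorm_lb.
have hnYs : nucnorm Ystar <= inner Ystar Z.
  by rewrite /Ystar hY (inner_Ys_Zc hU) //; apply: nuc_Ys_le.
have e : forall X, inner G X - K * inner X Z = \sum_i \sum_j (G i j - K * Z i j) * X i j.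
  move=> X; rewrite /inner mulr_sumr -sumrB; apply: eq_bigr => i _.
  rewrite mulr_sumr -sumrB; apply: eq_bigr => j _; ring.
have key : inner G Y - K * inner Y Z - (inner G Ystar - K * inner Ystar Z) < 0.
  rewrite !e.
  have hsum : forall (F : 'I_n -> 'I_n -> R),
      \sum_i \sum_j F i j * Y i j - \sum_i \sum_j F i j * Ystar i j =
      \sum_i \sum_j F i j * (Y i j - Ystar i j).
    move=> F; rewrite -sumrB; apply: eq_bigr => i _.
    rewrite -sumrB; apply: eq_bigr => j _; ring.
  rewrite hsum.
  pose c : R := eps / 2 * mn.
  have cpos : 0 < c by rewrite /c mulr_gt0 // divr_gt0.
  have Klam : forall x, K * (x * lam) = x.
    by move=> x; rewrite mulrCA [K * _]mulrC hlam mulr1.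
  have Klam2 : forall x y, K * (x * lam * y) = x * y.
    by move=> x y; rewrite -[RHS]mulr1 -hlam; ring.
  have bound : forall i j, (G i j - K * Z i j) * (Y i j - Ystar i j)
      <= - c * `|Y i j - Ystar i j|.
    move=> i j.
    have hT := le_trans (entry_le_maxnorm (PT U0 W) i j) hPT.
    have hKT : `|K * PT U0 W i j| <= c.
      rewrite normrM gtr0_norm //; have := ler_wpM2l (ltW Kpos) hT.
      have -> : K * (eps / 2 * lam * Num.min cAc cA) = c.
        by rewrite /c /mn -[RHS]mulr1 -hlam; ring.
      done.
    move: hKT; rewrite ler_norml /c => /andP [hKT1 hKT2].
    have hZe : K * Z i j = K * (P i j + W i j) - K * PT U0 W i j.
      by rewrite /Z Zc_entry -/P; ring.
    have hPW : (P + W) i j = P i j + W i j by rewrite mxE.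
    have [hy0 hy1] := andP (hYf i j).
    have em1 : eps * mn <= eps * cAc by rewrite ler_wpM2l // ltW.
    have em2 : eps * mn <= eps * cA by rewrite ler_wpM2l // ltW.
    have [c1 c2 c3 c4] := hc i j.
    apply: term_bound; first by rewrite mulr_ge0 // ltW.
    have [hs|hs] : Ystar i j = 1 \/ Ystar i j = 0.
      by rewrite /Ystar mxE; case: (_ && _ && _); [left|right].
    - left; split; first by rewrite hs subr_le0.
      rewrite hZe; case: (hA01 i j) => hA.
      + have := c1 hs hA; rewrite hPW => h.
        have -> : P i j + W i j = - (1 + eps) * lam * cAc by lra.
        rewrite mxE hA (eq_sym 0 1) oner_eq0 Klam2; lra.
      + have := c3 hs hA; rewrite hPW => h.
        have hb : K * (P i j + W i j) <= (1 - eps) * cA.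
          rewrite -[X in _ <= X]Klam2; apply: ler_wpM2l; [exact: ltW | lra].
        rewrite mxE hA eqxx; lra.
    - right; split; first by rewrite hs subr0.
      have hP0 : P i j = 0 by apply: (P_zero hU spos hY).
      rewrite hZe hP0 add0r; case: (hA01 i j) => hA.
      + have := c4 hs hA => h.
        have hb : - ((1 - eps) * cAc) <= K * W i j.
          rewrite -[X in - X <= _]Klam2 -mulrN; apply: ler_wpM2l; [exact: ltW | lra].
        rewrite mxE hA (eq_sym 0 1) oner_eq0; lra.
      + have := c2 hs hA => h.
        have -> : W i j = (1 + eps) * lam * cA by lra.
        rewrite mxE hA eqxx Klam2; lra.
  have hD : [exists i, exists j, Y i j != Ystar i j].
    case: (boolP [exists i, exists j, Y i j != Ystar i j]) => // /existsPn h.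
    exfalso; apply: hne; apply/matrixP => i j.
    by move: (h i) => /existsPn /(_ j) /negPn /eqP.
  case/existsP: hD => i0 /existsP [j0 hij].
  have hS : 0 < \sum_i \sum_j `|Y i j - Ystar i j|.
    apply: lt_le_trans (le_sum_term (F := fun i => \sum_j `|Y i j - Ystar i j|) i0 _); last first.
      by move=> i; apply: sumr_ge0 => j _; exact: normr_ge0.
    apply: lt_le_trans (le_sum_term (F := fun j => `|Y i0 j - Ystar i0 j|) j0 _) => //.
    by rewrite normr_gt0 subr_eq0.
  apply: (@le_lt_trans _ _ (\sum_i \sum_j - c * `|Y i j - Ystar i j|)).
    by apply: ler_sum => i _; apply: ler_sum => j _; exact: bound.
  have -> : \sum_i \sum_j - c * `|Y i j - Ystar i j| = - c * \sum_i \sum_j `|Y i j - Ystar i j|.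
    by rewrite mulr_sumr; apply: eq_bigr => i _; rewrite mulr_sumr.
  by rewrite mulNr oppr_lt0 mulr_gt0.
rewrite /objective !lin -/K.
have h1 := ler_wpM2l (ltW Kpos) hnY.
have h2 := ler_wpM2l (ltW Kpos) hnYs.
lra.
Qed.
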